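(* (Fundamental Theorem of Calculus for piecewise continuous functions) For every $u\in\mathfrak{U}(\mathbb{R})$ and every $\gamma_n<\gamma_m$ in $\Gamma$, $$\int_{\gamma_n}^{\gamma_m}D_2u(x)\,dx=\sum_{i=n}^{m-1}\left[u^-(\gamma_{i+1})-u^+(\gamma_i)\right].$$
   Context: Framework (Λ-limits / nonstandard analysis): $\mathfrak{X}=\mathcal{P}_{fin}(\mathfrak{F}(\mathbb{R},\mathbb{R}))$ directed by inclusion; $\mathbb{R}^*\supset\mathbb{R}$ is a non-Archimedean ordered field of Λ-limits of nets $\mathfrak{X}\to\mathbb{R}$; internal sets/functions, natural extensions $E^*,f^*$, hyperfinite sums are defined via Λ-limits; for internal $u$, $\int_a^bu\,dx$ means $(\int_a^b)^*u\,dx$. For $\lambda\in\mathfrak{X}$, $V_\lambda$ is the span of $\lambda$; an internal $u=\lim_{\lambda\uparrow\Lambda}u_\lambda$ is an ultrafunction if $u_\lambda\in V_\lambda$ for all $\lambda$; for a vector space $W$ of real functions, $\widetilde{W}=W^*\cap\{\text{ultrafunctions}\}$. Grid: a positive infinite $\beta\in\mathbb{R}^*$, a hyperfinite $\Gamma=\{\gamma_0<\dots<\gamma_\ell\}\subset\mathbb{R}^*$ with $\gamma_0=-\beta$, $\gamma_\ell=\beta$, $0<\gamma_{j+1}-\gamma_j<\eta$ for a fixed infinitesimal $\eta$, and $\mathbb{R}\subseteq\Gamma$; $\mathbb{I}_j=(\gamma_j,\gamma_{j+1})_{\mathbb{R}^*}$ with characteristic function $\chi_j$. $\mathfrak{U}(\mathbb{R})$: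 functions $u:[-\beta,\beta]\to\mathbb{R}^*$ of the form $\sum_{j=0}^{\ell-1}v_j\chi_j$ with $v_j\in\widetilde{\mathcal{C}^1(\mathbb{R})}$, with the $L^2$ inner product $\int^*uv$; $u^\pm(\gamma_j)$ are the internal one-sided limits of $u$ at grid points. For $u=\sum_jv_j\chi_j\in\mathfrak{U}(\mathbb{R})$, $u'=\sum_jv_j'\chi_j$ (piecewise derivative) and $D_2u=P_{\mathfrak{U}}(u')$, where $P_{\mathfrak{U}}$ is the orthogonal projection onto $\mathfrak{U}(\mathbb{R})$ in $[L^2(\mathbb{R})]^*$. *)

(* Defs.v *)
(* Λ-limits are modelled as the ultrapower of nets
   indexed by finite subsets λ of F(R,R) modulo a fine ultrafilter U. *)
From HB Require Import structures.
From mathcomp Require Import all_boot all_order all_algebra.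
From mathcomp Require Import all_classical all_reals all_analysis.
From Stdlib Require Import ClassicalEpsilon.
Set Implicit Arguments. Unset Strict Implicit. Unset Printing Implicit Defensive.
Import Order.TTheory GRing.Theory Num.Theory.
Import numFieldNormedType.Exports.
Local Open Scope classical_set_scope.
Local Open Scope ring_scope.

Section LambdaDefs.
Variable R : realType.

Definition Xi := set (R -> R).

Definition fine_ultrafilter (U : set (set Xi)) : Prop :=
  U setT /\ ~ U set0 /\
  (forall A B, U A -> U B -> U (A `&` B)) /\
  (forall A B, A `<=` B -> U A -> U B) /\
  (forall A, U A \/ U (~` A)) /\
  U [set l | finite_set l] /\
  (forall l0 : Xi, finite_set l0 -> U [set l | l0 `<=` l]).

Definition in_span (l : Xi) (f : R -> R) : Prop :=
  exists (n : nat) (g : nat -> R -> R) (c : nat -> R),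
    (forall i, (i < n)%N -> l (g i)) /\ f = (fun x => \sum_(i < n) c i * g i x).

Definition C1 (f : R -> R) : Prop :=
  (forall x : R, derivable f x 1) /\ continuous (derive1 f).

Definition chi (a b : R) (x : R) : R := if (a < x) && (x < b) then 1 else 0.

Definition pw (ell : nat) (gam : nat -> R) (w : nat -> R -> R) : R -> R :=
  fun x => \sum_(j < ell) w j x * chi (gam j) (gam j.+1) x.

(* level-λ version of 𝔘(R) *)
Definition Ulev (l : Xi) (ell : nat) (gam : nat -> R) (f : R -> R) : Prop :=
  exists w : nat -> R -> R,
    (forall j, (j < ell)%N -> in_span l (w j) /\ C1 (w j)) /\ f = pw ell gam w.

Definition L2ip (f g : R -> R) : R :=
  Rintegral lebesgue_measure setT (fun x => f x * g x).

Definition is_proj (l : Xi) (ell : nat) (gam : nat -> R) (f p : R -> R) : Prop :=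
  Ulev l ell gam p /\ (forall z, Ulev l ell gam z -> L2ip (f \- p) z = 0).

Definition projU (l : Xi) (ell : nat) (gam : nat -> R) (f : R -> R) : R -> R :=
  epsilon (inhabits (fun _ : R => 0)) (is_proj l ell gam f).

Definition pw_deriv (ell : nat) (gam : nat -> R) (v : nat -> R -> R) : R -> R :=
  pw ell gam (fun j => derive1 (v j)).

(* level-λ value of D_2 u = P_𝔘(u') *)
Definition D2 (l : Xi) (ell : nat) (gam : nat -> R) (v : nat -> R -> R) : R -> R :=
  projU l ell gam (pw_deriv ell gam v).

Definition lim_right (f : R -> R) (a : R) : R := lim (f @ at_right a).
Definition lim_left (f : R -> R) (a : R) : R := lim (f @ at_left a).

End LambdaDefs.

(* Main.v *)
Require Import Defs.
From HB Require Import structures.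
From mathcomp Require Import all_boot all_order all_algebra.
From mathcomp Require Import all_classical all_reals all_analysis.
From mathcomp Require Import ring lra.
From Stdlib Require Import ClassicalEpsilon.
Import Order.TTheory GRing.Theory Num.Theory.
Import numFieldNormedType.Exports.
Local Open Scope classical_set_scope.
Local Open Scope ring_scope.
Set Implicit Arguments. Unset Strict Implicit.

Section Proj.
Variable R : realFieldType.
Variable V : lmodType R.
Variable A : V -> Prop.
Variable B : V -> V -> R.
Hypothesis hA : forall a x y, A x -> A y -> A (a *: x + y).
Hypothesis hBl : forall a x y z, A x -> A y -> A z ->
  B (a *: x + y) z = a * B x z + B y z.
Hypothesis hBs : forall x y, A x -> A y -> B x y = B y x.
Hypothesis hBp : forall x, A x -> 0 <= B x x.

Definition subsp (W : V -> Prop) :=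
  W 0 /\ forall a x y, W x -> W y -> W (a *: x + y).

Lemma A0 x : A x -> A 0.
Proof. by move=> Ax; have := hA (-1) Ax Ax; rewrite scaleN1r addNr. Qed.
Lemma AD x y : A x -> A y -> A (x + y).
Proof. by move=> Ax Ay; have := hA 1 Ax Ay; rewrite scale1r. Qed.
Lemma AZ a x : A x -> A (a *: x).
Proof. by move=> Ax; have := hA a Ax (A0 Ax); rewrite addr0. Qed.
Lemma AB x y : A x -> A y -> A (x - y).
Proof. by move=> Ax Ay; have := hA (-1) Ay Ax; rewrite scaleN1r addrC. Qed.

Lemma B0l x z : A x -> A z -> B 0 z = 0.
Proof.
move=> Ax Az; have A0' := A0 Ax.
have := hBl 1 A0' A0' Az; rewrite scaler0 addr0 mul1r.
by move=> /(congr1 (fun t => t - B 0 z)); rewrite subrr addrK => <-.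
Qed.
Lemma BDl x y z : A x -> A y -> A z -> B (x + y) z = B x z + B y z.
Proof. by move=> Ax Ay Az; have := hBl 1 Ax Ay Az; rewrite scale1r mul1r. Qed.
Lemma BZl a x z : A x -> A z -> B (a *: x) z = a * B x z.
Proof.
move=> Ax Az; have := hBl a Ax (A0 Ax) Az; rewrite addr0 => ->.
by rewrite (B0l Ax Az) addr0.
Qed.
Lemma BBl x y z : A x -> A y -> A z -> B (x - y) z = B x z - B y z.
Proof.
move=> Ax Ay Az; have := hBl (-1) Ay Ax Az; rewrite scaleN1r addrC => ->.
by rewrite mulN1r addrC.
Qed.
Lemma BDr x y z : A x -> A y -> A z -> B z (x + y) = B z x + B z y.
Proof.
by move=> Ax Ay Az; rewrite (hBs Az (AD Ax Ay)) BDl // (hBs Ax Az) (hBs Ay Az).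
Qed.
Lemma BZr a x z : A x -> A z -> B z (a *: x) = a * B z x.
Proof. by move=> Ax Az; rewrite (hBs Az (AZ a Ax)) BZl // (hBs Ax Az). Qed.
Lemma BBr x y z : A x -> A y -> A z -> B z (x - y) = B z x - B z y.
Proof.
by move=> Ax Ay Az; rewrite (hBs Az (AB Ax Ay)) BBl // (hBs Ax Az) (hBs Ay Az).
Qed.

Lemma CS r h : A r -> A h -> B h h = 0 -> B r h = 0.
Proof.
move=> Ar Ah hh0; apply/eqP/negP => /negP rh0.
pose t := - (B r r + 1) / (2 * B r h).
have Ath := AZ t Ah; have Arth := AD Ar Ath.
have := hBp Arth.
rewrite (BDl Ar Ath Arth) (BDr Ar Ath Ar) (BZl t Ah Arth) (BDr Ar Ath Ah).
rewrite (BZr t Ah Ar) (BZr t Ah Ah) (hBs Ah Ar) hh0.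
have -> : B r r + t * B r h + t * (B r h + t * 0) = -1.
  rewrite /t; field; exact: rh0.
by rewrite ler0N1.
Qed.

Variables (I : Type) (G : I -> V).
Definition spanS (s : seq I) x := exists c : I -> R, x = \sum_(i <- s) c i *: G i.

Lemma spanS_sub s : subsp (spanS s).
Proof.
split.
  by exists (fun=> 0); rewrite big1 // => i _; rewrite scale0r.
move=> a x y [c ->] [d ->]; exists (fun i => a * c i + d i).
rewrite scaler_sumr -big_split /=; apply: eq_bigr => i _.
by rewrite scalerDl scalerA.
Qed.

Lemma proj_exists (s : seq I) : forall W, subsp W -> (forall x, W x -> A x) ->
  (forall x, W x -> spanS s x) ->
  forall f, A f -> exists p, W p /\ forall z, W z -> B (f - p) z = 0.
Proof.
elim: s => [|i s IH] W [W0 WC] WA Wsp f Af.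
  exists 0; split => // z Wz; have [c ->] := Wsp z Wz.
  rewrite big_nil subr0 hBs //; last exact: (A0 Af).
  exact: (B0l Af Af).
have WD : forall x y, W x -> W y -> W (x + y).
  by move=> x y Wx Wy; have := WC 1 x y Wx Wy; rewrite scale1r.
have WZ : forall a x, W x -> W (a *: x).
  by move=> a x Wx; have := WC a x 0 Wx W0; rewrite addr0.
have WB : forall x y, W x -> W y -> W (x - y).
  by move=> x y Wx Wy; have := WC (-1) y x Wy Wx; rewrite scaleN1r addrC.
case: (boolp.pselect (forall w, W w -> spanS s w)) => [allW|].
  exact: IH.
move=> /boolp.existsNP [w0 /boolp.not_implyP [Ww0 nsp]].
pose W' := fun x => W x /\ spanS s x.
have sW' : subsp W'.
  split; first by split => //; exact: (spanS_sub s).1.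
  move=> a x y [Wx sx] [Wy sy]; split; first exact: WC.
  exact: (spanS_sub s).2.
have W'A : forall x, W' x -> A x by move=> x [Wx _]; exact: WA.
have IH' := IH W' sW' W'A (fun x Wx => Wx.2).
have [c0 ew0] := Wsp w0 Ww0.
rewrite big_cons in ew0.
have c0i : c0 i != 0.
  apply/negP => /eqP c0i0; apply: nsp; exists c0.
  by rewrite ew0 c0i0 scale0r add0r.
have decomp : forall z, W z -> exists t, W' (z - t *: w0).
  move=> z Wz; have [c ez] := Wsp z Wz; rewrite big_cons in ez.
  exists (c i / c0 i); split; first by apply: WB => //; exact: WZ.
  exists (fun j => c j - c i / c0 i * c0 j).
  rewrite ez ew0 scalerDr scaler_sumr scalerA.
  have -> : c i / c0 i * c0 i = c i by rewrite divfK.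
  rewrite opprD addrACA subrr add0r -sumrN -big_split /=.
  by apply: eq_bigr => j _; rewrite scalerBl scalerA.
have Aw0 := WA _ Ww0.
have [q [W'q qorth]] := IH' w0 Aw0.
have [p' [W'p' porth]] := IH' f Af.
have Aq := W'A _ W'q; have Ap' := W'A _ W'p'.
pose h := w0 - q.
have Wh : W h by apply: WB => //; exact: W'q.1.
have Ah : A h by exact: WA.
pose r := f - p'.
have Ar : A r by exact: AB.
have hy : forall y, W' y -> B h y = 0 by move=> y /qorth.
have ry : forall y, W' y -> B r y = 0 by move=> y /porth.
have zdec : forall z, W z -> exists t y, W' y /\ z = y + t *: h /\ A y.
  move=> z Wz; have [t Wzt] := decomp z Wz.
  have W'y : W' (t *: q + (z - t *: w0)) by exact: sW'.2.
  exists t, (t *: q + (z - t *: w0)); split => //; split; last exact: W'A.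
  rewrite /h scalerBr.
  by rewrite [RHS]addrC addrA subrK addrC subrK.
have [hh0|hh0] := eqVneq (B h h) 0.
  have rh := CS Ar Ah hh0.
  exists p'; split; first exact: W'p'.1.
  move=> z Wz; have [t [y [W'y [-> Ay]]]] := zdec z Wz.
  have Ath := AZ t Ah.
  by rewrite -/r (BDr Ay Ath Ar) (BZr t Ah Ar) rh ry // mulr0 addr0.
pose al := B r h / B h h.
exists (p' + al *: h); split.
  by apply: WD; [exact: W'p'.1 | exact: WZ].
move=> z Wz; have [t [y [W'y [-> Ay]]]] := zdec z Wz.
have -> : f - (p' + al *: h) = r - al *: h by rewrite /r opprD addrA.
have Ath := AZ t Ah; have Aah := AZ al Ah; have Ayth := AD Ay Ath.
rewrite (BBl Ar Aah Ayth) (BZl al Ah Ayth) (BDr Ay Ath Ar) (BDr Ay Ath Ah).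
rewrite (BZr t Ah Ar) (BZr t Ah Ah) ry // hy //.
rewrite /al; field; exact: hh0.
Qed.
End Proj.

Section Grid.
Variable R : realType.
Notation mu := (@lebesgue_measure R).
Variables (ell : nat) (gam : nat -> R).
Hypothesis hinc : forall j, (j < ell)%N -> gam j < gam j.+1.

Lemma gam_le i j : (i <= j)%N -> (j <= ell)%N -> gam i <= gam j.
Proof.
elim: j => [|j IH] ij jl; first by move: ij; rewrite leqn0 => /eqP ->.
move: ij; rewrite leq_eqVlt => /orP[/eqP -> //|]; rewrite ltnS => ij.
apply: le_trans (IH ij (ltnW jl)) _; exact/ltW/hinc.
Qed.

Lemma gam_lt i j : (i < j)%N -> (j <= ell)%N -> gam i < gam j.
Proof.
move=> ij jl; apply: lt_le_trans (hinc _) (gam_le ij jl).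
exact: leq_trans ij jl.
Qed.

Lemma chi_patch (w : R -> R) a b : (fun x => w x * chi a b x) = w \_ `]a, b[.
Proof.
apply/funext => x; rewrite patchE /chi.
case: ifP => /= h; rewrite ?mulr1 ?mulr0; first by rewrite mem_set //= in_itv /= h.
by rewrite ifF //; apply/negbTE; rewrite notin_setE /= in_itv /= h.
Qed.

Lemma pw_in i x w : (i < ell)%N -> gam i < x < gam i.+1 ->
  pw ell gam w x = w i x.
Proof.
move=> il /andP[xi xi1]; rewrite /pw (bigD1 (Ordinal il)) //= /chi xi xi1 /=.
rewrite mulr1 big1 ?addr0 // => j jne; case: ifP => [/andP[a b]|]; last by rewrite mulr0.
exfalso; case: (ltngtP j i) => [ji|ij|e].
- have : gam j.+1 <= gam i by apply: gam_le => //; exact: ltnW.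
  by move=> h; have := lt_le_trans (lt_trans b (lt_le_trans (le_lt_trans h xi) (lexx x))) (lexx x); rewrite ltxx.
- have : gam i.+1 <= gam j by apply: gam_le => //; exact: ltnW.
  by move=> h; have := lt_trans (lt_le_trans xi1 h) a; rewrite ltxx.
- by move/eqP: jne; apply; apply: val_inj.
Qed.

Lemma pw_out x w : (forall i, (i < ell)%N -> ~~ (gam i < x < gam i.+1)) ->
  pw ell gam w x = 0.
Proof.
move=> h; rewrite /pw big1 // => j _; rewrite /chi ifF ?mulr0 //.
exact/negbTE/h.
Qed.

Lemma pw_cases x : (exists2 i, (i < ell)%N & gam i < x < gam i.+1) \/
  (forall i, (i < ell)%N -> ~~ (gam i < x < gam i.+1)).
Proof.
case: (boolp.pselect (exists2 i, (i < ell)%N & gam i < x < gam i.+1)); first by left.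
move=> nh; right => i il; apply/negP => h; apply: nh; by exists i.
Qed.

Lemma pw_mul w1 w2 x :
  pw ell gam w1 x * pw ell gam w2 x = pw ell gam (fun j y => w1 j y * w2 j y) x.
Proof.
case: (pw_cases x) => [[i il hi]|h]; first by rewrite !(pw_in _ il hi).
by rewrite !pw_out // mulr0.
Qed.

Lemma fct_lin (a : R) (f g : R -> R) x : (a *: f + g) x = a * f x + g x.
Proof. by []. Qed.

Lemma pw_lin a w1 w2 :
  a *: pw ell gam w1 + pw ell gam w2 = pw ell gam (fun j => a *: w1 j + w2 j).
Proof.
apply/funext => x; rewrite fct_lin /pw mulr_sumr -big_split /=.
by apply: eq_bigr => j _; rewrite fct_lin mulrDl mulrA.
Qed.

Lemma int_piece D (mD : measurable D) (w : R -> R) a b : continuous w ->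
  mu.-integrable D (EFin \o (fun x => w x * chi a b x)).
Proof.
move=> cw; apply: (@integrableS _ _ _ _ setT) => //.
rewrite chi_patch -restrict_EFin; apply/integrable_restrict => //; rewrite setTI.
have h : mu.-integrable `[a, b] (EFin \o w).
  apply: continuous_compact_integrable; first exact: segment_compact.
  exact: continuous_subspaceT.
apply: integrableS h => //.
by move=> x /=; rewrite !in_itv /= => /andP[h1 h2]; rewrite (ltW h1) (ltW h2).
Qed.

Lemma int_sumF D (mD : measurable D) n (F : 'I_n -> R -> R) :
  (forall i, mu.-integrable D (EFin \o F i)) ->
  mu.-integrable D (EFin \o (fun x => \sum_(i < n) F i x)).
Proof.
move=> hF; have -> : EFin \o (fun x => \sum_(i < n) F i x) =
   (fun x => \sum_(i <- index_enum 'I_n | true) (F i x)%:E).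
  by apply/funext => x /=; rewrite sumEFin.
by apply: integrable_sum => // i _; exact: hF.
Qed.

Lemma Rint_sum D (mD : measurable D) n (F : 'I_n -> R -> R) :
  (forall i, mu.-integrable D (EFin \o F i)) ->
  Rintegral mu D (fun x => \sum_(i < n) F i x) = \sum_(i < n) Rintegral mu D (F i).
Proof.
elim: n F => [|n IH] F hF.
  rewrite big_ord0; under eq_Rintegral do rewrite big_ord0.
  by rewrite Rintegral_cst // mul0r.
under eq_Rintegral do rewrite big_ord_recr /=.
rewrite big_ord_recr /=.
rewrite RintegralD //; last exact: int_sumF.
by rewrite (IH (fun i => F (widen_ord (leqnSn n) i))).
Qed.

Lemma int_pw D (mD : measurable D) w :
  (forall j, (j < ell)%N -> continuous (w j)) ->
  mu.-integrable D (EFin \o pw ell gam w).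
Proof.
move=> cw; apply: int_sumF => // j; apply: int_piece => //; exact: cw.
Qed.

Lemma Rint_pw D (mD : measurable D) w :
  (forall j, (j < ell)%N -> continuous (w j)) ->
  Rintegral mu D (pw ell gam w) =
  \sum_(j < ell) Rintegral mu (D `&` `]gam j, gam j.+1[) (w j).
Proof.
move=> cw; rewrite /pw Rint_sum //; last by move=> j; apply: int_piece => //; exact: cw.
apply: eq_bigr => j _; rewrite Rintegral_mkcondr; apply: eq_Rintegral => x _.
by rewrite -chi_patch.
Qed.


Definition Acl (h : R -> R) :=
  exists w, (forall j, (j < ell)%N -> continuous (w j)) /\ h = pw ell gam w.

Lemma Acl_lin a x y : Acl x -> Acl y -> Acl (a *: x + y).
Proof.
move=> [w1 [c1 ->]] [w2 [c2 ->]]; exists (fun j => a *: w1 j + w2 j).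
split; last by rewrite pw_lin.
move=> j jl z; apply: continuousD; [apply: continuousZr; exact: c1|exact: c2].
Qed.

Lemma Acl0 : Acl 0.
Proof.
exists (fun _ _ => 0); split; first by move=> j _ z; exact: cst_continuous.
by apply/funext => x; rewrite /pw big1 // => j _; rewrite mul0r.
Qed.

Lemma AclZ a x : Acl x -> Acl (a *: x).
Proof. by move=> Ax; have := Acl_lin a Ax Acl0; rewrite addr0. Qed.

Lemma int_prod x y : Acl x -> Acl y ->
  mu.-integrable setT (EFin \o (fun t => x t * y t)).
Proof.
move=> [w1 [c1 ->]] [w2 [c2 ->]].
have -> : (fun t => pw ell gam w1 t * pw ell gam w2 t) =
    pw ell gam (fun j y => w1 j y * w2 j y).
  by apply/funext => t; exact: pw_mul.
apply: int_pw => // j jl z; apply: continuousM; [exact: c1|exact: c2].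
Qed.

Lemma L2_lin a x y z : Acl x -> Acl y -> Acl z ->
  L2ip (a *: x + y) z = a * L2ip x z + L2ip y z.
Proof.
move=> Ax Ay Az; rewrite /L2ip.
under eq_Rintegral do rewrite fct_lin mulrDl.
rewrite RintegralD //; last exact: int_prod.
  under eq_Rintegral do rewrite -mulrA.
  by rewrite RintegralZl //; exact: int_prod.
exact: (int_prod (AclZ a Ax) Az).
Qed.

Lemma L2_sym x y : Acl x -> Acl y -> L2ip x y = L2ip y x.
Proof. by move=> _ _; rewrite /L2ip; under eq_Rintegral do rewrite mulrC. Qed.

Lemma L2_pos x : Acl x -> 0 <= L2ip x x.
Proof. by move=> _; apply: Rintegral_ge0 => t _; rewrite -expr2 sqr_ge0. Qed.

Lemma proj_ex (W : (R -> R) -> Prop) I (G : I -> R -> R) (s : seq I) :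
  subsp W -> (forall x, W x -> Acl x) -> (forall x, W x -> spanS G s x) ->
  forall f, Acl f -> exists p, W p /\ forall z, W z -> L2ip (f - p) z = 0.
Proof.
move=> sW WA Ws f Af.
exact: (@proj_exists R _ Acl (@L2ip R) Acl_lin L2_lin L2_sym L2_pos I G s W sW WA Ws f Af).
Qed.


Lemma pw_sub w1 w2 x :
  pw ell gam w1 x - pw ell gam w2 x = pw ell gam (fun j y => w1 j y - w2 j y) x.
Proof.
rewrite /pw -sumrB; apply: eq_bigr => j _; by rewrite mulrBl.
Qed.

Lemma lim_left_pw w i : (i < ell)%N -> continuous (w i) ->
  lim_left (pw ell gam w) (gam i.+1) = w i (gam i.+1).
Proof.
move=> il cw; rewrite /lim_left; apply: cvg_lim => //.
apply: cvg_trans (cvg_at_left_filter (cw (gam i.+1))).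
apply: near_eq_cvg; near=> x.
rewrite (pw_in w il) //; apply/andP; split.
- near: x; exact: nbhs_left_gt (hinc il).
- near: x; exact: nbhs_left_lt.
Unshelve. all: by end_near.
Qed.

Lemma lim_right_pw w i : (i < ell)%N -> continuous (w i) ->
  lim_right (pw ell gam w) (gam i) = w i (gam i).
Proof.
move=> il cw; rewrite /lim_right; apply: cvg_lim => //.
apply: cvg_trans (cvg_at_right_filter (cw (gam i))).
apply: near_eq_cvg; near=> x.
rewrite (pw_in w il) //; apply/andP; split.
- near: x; exact: nbhs_right_gt.
- near: x; exact: nbhs_right_lt (hinc il).
Unshelve. all: by end_near.
Qed.

Lemma sum_window (F : nat -> R) n m : (n <= m)%N -> (m <= ell)%N ->
  \sum_(j < ell) (if (n <= j < m)%N then F j else 0) = \sum_(n <= j < m) F j.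
Proof.
move=> nm ml.
rewrite -(big_mkord xpredT (fun j => if (n <= j < m)%N then F j else 0)).
rewrite (big_cat_nat (leq0n n) (leq_trans nm ml)) /=.
rewrite (big_cat_nat nm ml) /=.
rewrite big1_seq ?add0r; last first.
  by move=> j /andP[_]; rewrite mem_index_iota => /andP[_ jn]; rewrite leqNgt jn.
rewrite [X in _ + X]big1_seq ?addr0; last first.
  by move=> j /andP[_]; rewrite mem_index_iota => /andP[mj _]; rewrite ltnNge mj andbF.
apply: eq_big_seq => j; rewrite mem_index_iota => ->; by [].
Qed.

End Grid.

Section Level.
Variable R : realType.
Notation mu := (@lebesgue_measure R).

Lemma fct_lin' (a : R) (f g : R -> R) x : (a *: f + g) x = a * f x + g x.
Proof. by []. Qed.

Lemma C1_cont (f : R -> R) : C1 f -> continuous f.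
Proof.
move=> [df _] x; apply: differentiable_continuous.
by rewrite -derivable1_diffP; exact: df.
Qed.

Lemma C1_lin a (f g : R -> R) : C1 f -> C1 g -> C1 (a *: f + g).
Proof.
move=> [df cf] [dg cg]; split.
  by move=> x; apply: derivableD => //; apply: derivableZ.
have -> : derive1 (a *: f + g) = a *: derive1 f + derive1 g.
  apply/funext => x; rewrite fct_lin' !derive1E deriveD //; last exact: derivableZ.
  by rewrite deriveZ.
move=> x; apply: continuousD; [apply: continuousZr; exact: cf|exact: cg].
Qed.

Lemma C1_cst (c : R) : C1 (fun _ => c).
Proof.
split; first by move=> x; exact: derivable_cst.
have -> : derive1 (fun _ : R => c) = fun _ => 0.
  by apply/funext => x; exact: derive1_cst.
by move=> x; exact: cst_continuous.
Qed.

Variables (l : set (R -> R)) (s : seq (R -> R)).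
Hypothesis hs : l = [set` s].
Hypothesis us : uniq s.

Lemma span_to f : in_span l f -> exists a : (R -> R) -> R, f = \sum_(h <- s) a h *: h.
Proof.
move=> [n [g [c [gl ->]]]].
elim: n g c gl => [|n IH] g c gl.
  exists (fun=> 0); rewrite big1 => [|h _]; last by rewrite scale0r.
  by apply/funext => x; rewrite big_ord0.
have [a ea] := IH g c (fun i il => gl i (ltnW il)).
have gn : g n \in s by have := gl n (ltnSn n); rewrite hs.
exists (fun h => a h + (if h == g n then c n else 0)).
under eq_bigr do rewrite scalerDl.
rewrite big_split /= -ea (bigD1_seq (g n)) //= eqxx big1 ?addr0; last first.
  by move=> h hne; rewrite (negbTE hne) scale0r.
apply/funext => x; rewrite big_ord_recr /=.
by [].
Qed.

Lemma span_from a : in_span l (\sum_(h <- s) a h *: h).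
Proof.
exists (size s), (fun i => nth 0 s i), (fun i => a (nth 0 s i)); split.
  by move=> i il; rewrite hs /=; exact: mem_nth.
apply/funext => x; rewrite fct_sumE /= (big_nth 0) big_mkord.
by apply: eq_bigr.
Qed.

Lemma span_lin a f g : in_span l f -> in_span l g -> in_span l (a *: f + g).
Proof.
move=> /span_to[a1 ->] /span_to[a2 ->].
have -> : a *: \sum_(h <- s) a1 h *: h + \sum_(h <- s) a2 h *: h =
    \sum_(h <- s) (a * a1 h + a2 h) *: h.
  rewrite scaler_sumr -big_split /=; apply: eq_bigr => h _.
  by rewrite scalerDl scalerA.
exact: span_from.
Qed.

Lemma span0 : in_span l 0.
Proof.
exists 0%N, (fun _ => 0), (fun _ => 0); split => //.
by apply/funext => x; rewrite big_ord0.
Qed.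


Lemma int_oo (w : R -> R) a b : continuous w -> mu.-integrable `]a, b[ (EFin \o w).
Proof.
move=> cw; have h : mu.-integrable `[a, b] (EFin \o w).
  apply: continuous_compact_integrable; first exact: segment_compact.
  exact: continuous_subspaceT.
apply: integrableS h => //.
by move=> x /=; rewrite !in_itv /= => /andP[h1 h2]; rewrite (ltW h1) (ltW h2).
Qed.

Lemma ftc_oo (f : R -> R) a b : a < b -> C1 f ->
  Rintegral mu `]a, b[ (derive1 f) = f b - f a.
Proof.
move=> ab hf; have cf := C1_cont hf; have cd := hf.2.
have iab : mu.-integrable `[a, b] (EFin \o derive1 f).
  apply: continuous_compact_integrable; first exact: segment_compact.
  exact: continuous_subspaceT.
have i1 : mu.-integrable `]a, b[ (EFin \o derive1 f) by exact: int_oo.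
have i2 : mu.-integrable `[a, b[ (EFin \o derive1 f).
  apply: integrableS iab => //.
  by move=> x /=; rewrite !in_itv /= => /andP[h1 h2]; rewrite h1 (ltW h2).
rewrite (Rintegral_itv_obnd_cbnd i1) (Rintegral_itv_bndo_bndc i2).
rewrite /Rintegral (@continuous_FTC2 _ _ f _ _ ab) //=.
- exact: continuous_subspaceT.
- split.
  + by move=> x _; exact: hf.1.
  + exact: cvg_at_right_filter (cf a).
  + exact: cvg_at_left_filter (cf b).
Qed.

End Level.

Section Level2.
Variable R : realType.
Notation mu := (@lebesgue_measure R).
Variables (l : set (R -> R)) (s : seq (R -> R)).
Hypothesis hs : l = [set` s].
Hypothesis us : uniq s.
Variables (ell : nat) (gam : nat -> R).
Hypothesis hinc : forall j, (j < ell)%N -> gam j < gam j.+1.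

Lemma W_sub : subsp (Ulev l ell gam).
Proof.
split.
  exists (fun _ _ => 0); split.
    move=> j _; split; [exact: span0 | exact: C1_cst].
  by apply/funext => x; rewrite /pw big1 // => j _; rewrite mul0r.
move=> a x y [w1 [h1 ->]] [w2 [h2 ->]]; exists (fun j => a *: w1 j + w2 j).
split; last by rewrite pw_lin.
move=> j jl; have [s1 c1] := h1 j jl; have [s2 c2] := h2 j jl; split.
  exact: (span_lin hs us).
exact: C1_lin.
Qed.

Lemma W_Acl x : Ulev l ell gam x -> Acl ell gam x.
Proof.
move=> [w [h ->]]; exists w; split => // j jl; exact: C1_cont (h j jl).2.
Qed.

Definition Gf (q : nat * (R -> R)) : R -> R :=
  fun x => q.2 x * chi (gam q.1) (gam q.1.+1) x.
Definition Sq := [seq (j, h) | j <- iota 0 ell, h <- s].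

Lemma W_span x : Ulev l ell gam x -> spanS Gf Sq x.
Proof.
move=> [w [hw ->]].
have : forall j, exists a : (R -> R) -> R,
    (j < ell)%N -> w j = \sum_(h <- s) a h *: h.
  move=> j; case: (boolp.pselect (j < ell)%N) => jl.
    by have [a ea] := span_to hs us (hw j jl).1; exists a.
  by exists (fun=> 0).
move=> /boolp.choice [A hA].
exists (fun q => A q.1 q.2); apply/funext => t.
rewrite fct_sumE /= big_allpairs_dep /= /pw.
rewrite -(big_mkord xpredT (fun j => w j t * chi (gam j) (gam j.+1) t)).
rewrite /index_iota subn0; apply: eq_big_seq => j.
rewrite mem_iota add0n => /andP[_ jl].
rewrite (hA j jl) fct_sumE /= mulr_suml; apply: eq_bigr => h _.
have -> : (A j h *: h) t = A j h * h t by [].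
have -> : (A j h *: Gf (j, h)) t = A j h * Gf (j, h) t by [].
by rewrite /Gf /= mulrA.
Qed.

Lemma D2_proj v : (forall j, (j < ell)%N -> C1 (v j)) ->
  is_proj l ell gam (pw_deriv ell gam v) (D2 l ell gam v).
Proof.
move=> hv; rewrite /D2 /projU; apply: epsilon_spec.
have Af : Acl ell gam (pw_deriv ell gam v).
  exists (fun j => derive1 (v j)); split => // j jl; exact: (hv j jl).2.
have [p [Wp hp]] := proj_ex hinc W_sub W_Acl W_span Af.
by exists p; split.
Qed.


Lemma level_main v n m :
  (forall j, (j < ell)%N -> in_span l (v j) /\ C1 (v j)) -> (n < m <= ell)%N ->
  l (fun _ => 1) ->
  Rintegral mu `[gam n, gam m] (D2 l ell gam v) =
  \sum_(n <= i < m) (lim_left (pw ell gam v) (gam i.+1)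
                     - lim_right (pw ell gam v) (gam i)).
Proof.
move=> hv /andP[nm ml] l1.
have hC : forall j, (j < ell)%N -> C1 (v j) by move=> j jl; exact: (hv j jl).2.
have [[wp [hwp ep]] orth] := D2_proj hC.
have cwp : forall j, (j < ell)%N -> continuous (wp j).
  by move=> j jl; exact: C1_cont (hwp j jl).2.
have cv : forall j, (j < ell)%N -> continuous (v j) by move=> j jl; exact: C1_cont (hC j jl).
have cdv : forall j, (j < ell)%N -> continuous (derive1 (v j)).
  by move=> j jl; exact: (hC j jl).2.
pose zw j := fun _ : R => if (n <= j < m)%N then 1 else 0 : R.
have Wz : Ulev l ell gam (pw ell gam zw).
  exists zw; split => // j jl; rewrite /zw; case: ifP => _; split.
  - exists 1%N, (fun _ => fun _ => 1), (fun _ => 1); split => //.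
    by apply/funext => x; rewrite big_ord1 mulr1.
  - exact: C1_cst.
  - exact: span0.
  - exact: C1_cst.
have o := orth _ Wz; rewrite /L2ip in o.
have e1 : (fun x => (pw_deriv ell gam v \- D2 l ell gam v) x * pw ell gam zw x) =
    pw ell gam (fun j y => (derive1 (v j) y - wp j y) * zw j y).
  apply/funext => x; rewrite /= ep /pw_deriv pw_sub pw_mul //.
rewrite e1 Rint_pw // in o; last first.
  move=> j jl y; apply: cvgM; last exact: cvg_cst.
  by apply: cvgB; [exact: cdv | exact: cwp].
have o2 : \sum_(n <= j < m) (Rintegral mu `]gam j, gam j.+1[ (derive1 (v j))
     - Rintegral mu `]gam j, gam j.+1[ (wp j)) = 0.
  rewrite -(sum_window _ (ltnW nm) ml) -[RHS]o; apply: eq_bigr => j _.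
  rewrite setTI /zw; case: ifP => _.
    rewrite -RintegralB //; last by apply: int_oo; exact: cwp.
      by apply: eq_Rintegral => y _; rewrite mulr1.
    by apply: int_oo; exact: cdv.
  under [RHS]eq_Rintegral do rewrite mulr0.
  by rewrite Rintegral_cst // mul0r.
move/eqP: o2; rewrite sumrB subr_eq0 => /eqP o2.
rewrite ep Rint_pw //.
have -> : \sum_(j < ell) Rintegral mu (`[gam n, gam m] `&` `]gam j, gam j.+1[) (wp j)
    = \sum_(j < ell) (if (n <= j < m)%N
         then Rintegral mu `]gam j, gam j.+1[ (wp j) else 0).
  apply: eq_bigr => j _; have jl := ltn_ord j.
  case: ifP => /= hj.
    rewrite setIidr //; move: hj => /andP[nj jm] x /=; rewrite !in_itv /=.
    move=> /andP[h1 h2]; apply/andP; split.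
      exact: le_trans (gam_le hinc nj (ltnW jl)) (ltW h1).
    exact: le_trans (ltW h2) (gam_le hinc jm ml).
  rewrite (_ : _ `&` _ = set0) ?Rintegral_set0 //.
  apply/seteqP; split => x //= [] /=; rewrite !in_itv /= => /andP[a1 a2] /andP[b1 b2].
  move: hj => /negbT; rewrite negb_and -!ltnNge => /orP[jn|mj].
    have := gam_le hinc jn (ltnW (leq_trans nm ml)).
    by move=> h; have := lt_le_trans b2 (le_trans h a1); rewrite ltxx.
  rewrite ltnS in mj; have := gam_le hinc mj (ltnW jl).
  by move=> h; have := le_lt_trans a2 (le_lt_trans h b1); rewrite ltxx.
rewrite (sum_window (fun j => Rintegral mu `]gam j, gam j.+1[ (wp j)) (ltnW nm) ml) -o2.
apply: eq_big_nat => j /andP[_ jm]; have jl := leq_trans jm ml.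
rewrite (lim_left_pw hinc jl (cv j jl)) (lim_right_pw hinc jl (cv j jl)).
by rewrite ftc_oo //; [exact: hinc | exact: hC].
Qed.

End Level2.

Unset Implicit Arguments.
Unset Strict Implicit.

Theorem mainTheorem14 (R : realType) (U : set (set (set (R -> R))))
  (hU : fine_ultrafilter U)
  (beta eta : set (R -> R) -> R) (ell : set (R -> R) -> nat)
  (gam : set (R -> R) -> nat -> R)
  (hbeta : forall r : R, U [set l | r < beta l])
  (heta : forall r : R, 0 < r -> U [set l | 0 < eta l < r])
  (hgam0 : U [set l | gam l 0%N = - beta l])
  (hgaml : U [set l | gam l (ell l) = beta l])
  (hspace : U [set l | forall j, (j < ell l)%N ->
                          0 < gam l j.+1 - gam l j < eta l])
  (hRG : forall r : R, U [set l | exists2 j, (j <= ell l)%N & gam l j = r])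
  (v : set (R -> R) -> nat -> R -> R)
  (hv : U [set l | forall j, (j < ell l)%N -> in_span l (v l j) /\ C1 (v l j)])
  (n m : set (R -> R) -> nat)
  (hnm : U [set l | (n l < m l <= ell l)%N]) :
  U [set l | Rintegral lebesgue_measure `[gam l (n l), gam l (m l)]
                 (D2 l (ell l) (gam l) (v l))
             = \sum_(n l <= i < m l)
                 (lim_left (pw (ell l) (gam l) (v l)) (gam l i.+1)
                  - lim_right (pw (ell l) (gam l) (v l)) (gam l i))].
Proof.
move: hU => [UT [U0 [UI [UM [Uult [Ufin Ufine]]]]]].
have U1 : U [set l | l (fun _ : R => 1)].
  apply: UM (Ufine [set (fun _ : R => 1)] (finite_set1 _)) => l /=.
  by apply; rewrite /set1.
have G := UI _ _ (UI _ _ (UI _ _ (UI _ _ Ufin U1) hspace) hv) hnm.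
apply: UM G => l [[[[lfin l1] hsp] hvl] hnml].
have [s0 es0] := (finite_seqP l).1 lfin.
have hs : l = [set` undup s0].
  by rewrite es0; apply/seteqP; split => x /=; rewrite mem_undup.
have hinc : forall j, (j < ell l)%N -> gam l j < gam l j.+1.
  by move=> j jl; have /andP[h _] := hsp j jl; rewrite -subr_gt0.
exact: (level_main hs (undup_uniq s0) hinc hvl hnml l1).
Qed.
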